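(* Let $\mathbf{A}$ be an affine algebra such that $\mathbf{A}^2$ is finitely generated. Then $d_{\mathbf{A}}(n)\in O(n)$. If, moreover, $\mathbf{A}$ is finite and has more than one element, then $d_{\mathbf{A}}(n)\in \Theta(n)$.
   Context: An algebra is affine if it is polynomially equivalent to a module. For an algebra $\mathbf{A}$ and $n\in\omega$, $d_{\mathbf{A}}(n)$ is the least size of a generating set of the direct power $\mathbf{A}^n$. Standard Big-O and Big-Theta notation is used. *)

(* Defs.v *)
From HB Require Import structures.
From Stdlib Require Import List.
From mathcomp Require Import all_boot all_algebra.


Unset Printing Implicit Defensive.
Import GRing.Theory.
Local Open Scope ring_scope.

Record signature := Signature { op_sym : Type; arity : op_sym -> nat }.
Arguments arity {s} o.

Record algebra (s : signature) := Algebra {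
  carrier :> Type;
  interp : forall o : op_sym s, ('I_(arity o) -> carrier) -> carrier }.
Arguments Algebra {s} carrier interp.
Arguments carrier {s} a.
Arguments interp {s} a o.

Definition power (s : signature) (A : algebra s) (n : nat) : algebra s :=
  @Algebra s ('I_n -> carrier A)
    (fun o x => fun i => interp A o (fun j => x j i)).
Arguments power {s} A n.

Inductive generated (s : signature) (A : algebra s) (X : carrier A -> Prop)
  : carrier A -> Prop :=
| gen_base x : X x -> generated s A X x
| gen_op (o : op_sym s) (a : 'I_(arity o) -> carrier A) :
    (forall j, generated s A X (a j)) -> generated s A X (interp A o a).

Arguments generated {s} A X _.

Definition generates (s : signature) (A : algebra s) (l : seq (carrier A)) :=
  forall x, generated A (fun y => In y l) x.
Arguments generates {s} A l.

Definition fin_generated (s : signature) (A : algebra s) :=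
  exists l : seq (carrier A), generates A l.
Arguments fin_generated {s} A.

(* d_A(n) <= k : A^n has a generating set with at most k elements. *)
Definition d_le (s : signature) (A : algebra s) (n k : nat) :=
  exists l : seq (carrier (power A n)), (size l <= k)%N /\ generates (power A n) l.
Arguments d_le {s} A n k.

(* k <= d_A(n) : every generating set of A^n has at least k elements. *)
Definition d_ge (s : signature) (A : algebra s) (n k : nat) :=
  forall l : seq (carrier (power A n)), generates (power A n) l -> (k <= size l)%N.
Arguments d_ge {s} A n k.

Definition finite_algebra (s : signature) (A : algebra s) :=
  exists l : seq (carrier A), forall x, In x l.
Arguments finite_algebra {s} A.

Inductive poly_op (s : signature) (A : algebra s) (k : nat)
  : (('I_k -> carrier A) -> carrier A) -> Prop :=
| pol_proj (i : 'I_k) : poly_op s A k (fun x => x i)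
| pol_const (c : carrier A) : poly_op s A k (fun _ => c)
| pol_comp (o : op_sym s) (g : 'I_(arity o) -> ('I_k -> carrier A) -> carrier A) :
    (forall j, poly_op s A k (g j)) ->
    poly_op s A k (fun x => interp A o (fun j => g j x)).
Arguments poly_op {s} A {k} _.

Inductive mod_op (R : Type) := MAdd | MNeg | MZero | MScal of R.
Arguments MAdd {R}. Arguments MNeg {R}. Arguments MZero {R}.

Definition mod_arity (R : Type) (o : mod_op R) : nat :=
  match o with MAdd => 2 | MNeg => 1 | MZero => 0 | MScal _ => 1 end.
Arguments mod_arity {R} o.

Definition mod_sig (R : Type) : signature := @Signature (mod_op R) (@mod_arity R).

Definition mod_interp (R : pzRingType) (M : lmodType R) (o : mod_op R)
  : ('I_(mod_arity o) -> M) -> M :=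
  match o as o0 return ('I_(mod_arity o0) -> M) -> M with
  | MAdd => fun x => x ord0 + x ord_max
  | MNeg => fun x => - x ord0
  | MZero => fun _ => 0
  | MScal r => fun x => r *: x ord0
  end.
Arguments mod_interp {R} M o.

Definition mod_alg (R : pzRingType) (M : lmodType R) : algebra (mod_sig R) :=
  @Algebra (mod_sig R) M (@mod_interp R M).
Arguments mod_alg {R} M.

Definition poly_equiv_via (s t : signature) (A : algebra s) (B : algebra t)
  (h : carrier A -> carrier B) :=
  bijective h /\
  forall k : nat,
    (forall f, poly_op A f -> exists g, @poly_op t B k g /\
        forall x, h (f x) = g (fun i => h (x i))) /\
    (forall g, poly_op B g -> exists f, @poly_op s A k f /\
        forall x, h (f x) = g (fun i => h (x i))).
Arguments poly_equiv_via {s t} A B h.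

Definition affine (s : signature) (A : algebra s) :=
  exists (R : pzRingType) (M : lmodType R) (h : carrier A -> M),
    poly_equiv_via A (mod_alg M) h.

Arguments affine {s} A.

(* Main.v *)
Require Import Defs.
From Stdlib Require Import List.
From mathcomp Require Import all_boot all_algebra.
From Stdlib Require Import FunctionalExtensionality ClassicalEpsilon Lia.
From mathcomp Require Import zify.
Import GRing.Theory.
Local Open Scope ring_scope.

Definition E (s : signature) (A : algebra s) (n i : nat) (p : 'I_2 -> carrier A) : 'I_n -> carrier A :=
  fun j => p (if (j < i)%N then ord0 else ord_max).

Lemma gen_map (s : signature) (A : algebra s) n (X : carrier (power A 2) -> Prop)
  (Y : carrier (power A n) -> Prop) (sg : 'I_n -> 'I_2) p :
  generated (power A 2) X p -> (forall q, X q -> Y (fun j => q (sg j))) ->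
  generated (power A n) Y (fun j => p (sg j)).
Proof.
move=> G HXY; elim: G => [x Xx|o a _ IH].
  by apply: gen_base; apply: HXY.
exact: (@gen_op s (power A n) Y o (fun j' j => a j' (sg j)) IH).
Qed.

Lemma gen_poly (s : signature) (A : algebra s) n (Y : carrier (power A n) -> Prop) k F :
  @poly_op s A k F -> (forall c, generated (power A n) Y (fun _ => c)) ->
  forall u : 'I_k -> ('I_n -> carrier A), (forall i, generated (power A n) Y (u i)) ->
  generated (power A n) Y (fun j => F (fun i => u i j)).
Proof.
move=> P Hc u Hu; elim: P => [i|c|o g _ IH] //.
exact: (@gen_op s (power A n) Y o (fun j' j => g j' (fun i => u i j)) IH).
Qed.

Lemma In_cat T (x : T) (a b : seq T) : In x a \/ In x b -> In x (a ++ b).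
Proof.
elim: a => [|y a IH] /=; first by case.
case=> [[->|H]|H]; [by left| right; apply: IH; left | right; apply: IH; right] => //.
Qed.

Lemma In_map T U (f : T -> U) x (a : seq T) : In x a -> In (f x) (map f a).
Proof. elim: a => //= y a IH [->|H]; [left|right; apply: IH]. by []. by []. Qed.

Lemma In_flat T U (F : nat -> T -> U) (l : seq T) p i (r : seq nat) :
  In p l -> i \in r -> In (F i p) (flatten [seq [seq F i q | q <- l] | i <- r]).
Proof.
move=> Hp; elim: r => //= a r IH; rewrite in_cons => /orP [/eqP->|H]; apply: In_cat.
  by left; exact: (@In_map _ _ (F a) _ _ Hp).
by right; apply: IH.
Qed.

Lemma size_flat T U (F : nat -> T -> U) (l : seq T) (r : seq nat) :
  size (flatten [seq [seq F i q | q <- l] | i <- r]) = (size r * size l)%N.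
Proof. elim: r => //= a r IH; by rewrite size_cat size_map IH mulSn. Qed.
Definition i0 : 'I_3 := @Ordinal 3 0 erefl.
Definition i1 : 'I_3 := @Ordinal 3 1 erefl.
Definition i2 : 'I_3 := @Ordinal 3 2 erefl.

Section M.
Variables (R : pzRingType) (M : lmodType R).
Definition Pn : ('I_3 -> M) -> M := fun x => mod_interp M MNeg (fun _ : 'I_1 => x i1).
Definition Psub : ('I_3 -> M) -> M := fun x =>
  mod_interp M MAdd (fun j : 'I_2 => (if j == ord0 then (fun x : 'I_3 -> M => x i0) else Pn) x).
Definition Pm : ('I_3 -> M) -> M := fun x =>
  mod_interp M MAdd (fun j : 'I_2 => (if j == ord0 then Psub else (fun x : 'I_3 -> M => x i2)) x).

Lemma Pm_poly : @poly_op (mod_sig R) (mod_alg M) 3 Pm.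
Proof.
have Hn : @poly_op (mod_sig R) (mod_alg M) 3 Pn.
  exact: (@pol_comp _ (mod_alg M) 3 MNeg (fun _ x => x i1) (fun _ => pol_proj _ _ _ i1)).
have Hs : @poly_op (mod_sig R) (mod_alg M) 3 Psub.
  apply: (@pol_comp _ (mod_alg M) 3 MAdd (fun j : 'I_2 => if j == ord0 then (fun x : 'I_3 -> M => x i0) else Pn)).
  by move=> j; case: (j == ord0) => //; apply: pol_proj.
apply: (@pol_comp _ (mod_alg M) 3 MAdd (fun j : 'I_2 => if j == ord0 then Psub else (fun x : 'I_3 -> M => x i2))).
by move=> j; case: (j == ord0) => //; apply: pol_proj.
Qed.

Lemma PmE x : Pm x = x i0 - x i1 + x i2.
Proof. by []. Qed.
End M.

Lemma part1 s (A : algebra s) (R : pzRingType) (M : lmodType R) (h : carrier A -> M) :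
  poly_equiv_via A (mod_alg M) h -> fin_generated (power A 2) ->
  exists C N : nat, forall n : nat, (N <= n)%N -> d_le A n (C * n).
Proof.
case=> [[g hK gK] Heq] [l Hl].
have [f [Pf Hf]] := (Heq 3%N).2 _ (@Pm_poly R M).
have fE : forall x, h (f x) = h (x i0) - h (x i1) + h (x i2) by move=> x; rewrite Hf.
exists (2 * size l)%N, 1%N; move=> n n1.
set L := flatten [seq [seq E s A n i q | q <- l] | i <- iota 0 n.+1].
exists L; split.
  rewrite /L size_flat size_iota mulnAC; apply: leq_mul => //; lia.
have HE : forall i p, (i <= n)%N -> generated (power A n) (fun y => In y L) (E s A n i p).
  move=> i p Hi.
  apply: (@gen_map s A n _ _ (fun j : 'I_n => if (j < i)%N then ord0 else ord_max) p (Hl p)).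
  move=> q Hq; apply: (@In_flat _ _ (E s A n) l q i _ Hq); by rewrite mem_iota.
have Hc : forall c, generated (power A n) (fun y => In y L) (fun _ : 'I_n => c).
  move=> c; exact: (HE 0%N (fun _ => c) (leq0n n)).
set z := g 0.
suff: forall k (x : 'I_n -> carrier A), (forall j : 'I_n, (k <= j)%N -> x j = z) ->
   generated (power A n) (fun y => In y L) x.
  move=> H x; apply: (H n) => j Hj; have := ltn_ord j; lia.
elim=> [|k IH] x Hx.
  have -> : x = fun _ => z by apply: functional_extensionality => j; apply: Hx.
  exact: Hc.
case: (ltnP k n) => Hkn; last first.
  apply: IH => j Hj; have := ltn_ord j; lia.
pose kk : 'I_n := Ordinal Hkn.
pose x' := fun j : 'I_n => if j == kk then z else x j.
have Gx' : generated (power A n) (fun y => In y L) x'.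
  apply: IH => j Hj; rewrite /x'; case: eqP => // /eqP Hne; apply: Hx.
  have : (nat_of_ord j != k) by [].
  lia.
pose p := fun t : 'I_2 => if t == ord0 then x kk else z.
pose u := fun t : 'I_3 => if t == i0 then x' else if t == i1 then E s A n k p else E s A n k.+1 p.
have Gu : forall t, generated (power A n) (fun y => In y L) (u t).
  move=> t; rewrite /u; case: (t == i0) => //; case: (t == i1); apply: HE; lia.
have := @gen_poly s A n _ 3 f Pf Hc u Gu.
suff -> : x = (fun j => f (fun i => u i j)) by [].
apply: functional_extensionality => j; apply: (can_inj hK); rewrite fE /u /= /x' /E /p.
case: (ltngtP j k) => Hjk.
- have -> : (j == kk) = false by apply/eqP => Hj; rewrite Hj /= ltnn in Hjk.
  by rewrite /= ltnS ltnW // eqxx subrK.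
- have -> : (j == kk) = false by apply/eqP => Hj; rewrite Hj /= ltnn in Hjk.
  by rewrite /= Hx // ltnNge Hjk /= subrK.
- have Hj : j = kk by apply: val_inj.
  by rewrite Hj eqxx /= ltnSn /= subrr add0r.
Qed.
Lemma aff (R : pzRingType) (M : lmodType R) k G :
  @poly_op (mod_sig R) (mod_alg M) k G ->
  exists (phi : 'I_k -> M -> M) (c : M), forall y, G y = \sum_(i < k) phi i (y i) + c.
Proof.
elim => [p|c|o g _ IH].
- exists (fun i a => if i == p then a else 0), 0 => y.
  rewrite addr0 (bigD1 p) //= eqxx big1 ?addr0 // => i /negbTE -> //.
- exists (fun _ _ => 0), c => y; by rewrite big1 ?add0r.
- case: o g IH => [| | |r] g IH /=.
  + have [p0 [c0 H0]] := IH ord0; have [p1 [c1 H1]] := IH ord_max.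
    exists (fun i a => p0 i a + p1 i a), (c0 + c1) => y.
    by rewrite H0 H1 big_split /= addrACA.
  + have [p0 [c0 H0]] := IH ord0.
    exists (fun i a => - p0 i a), (- c0) => y.
    by rewrite H0 opprD sumrN.
  + exists (fun _ _ => 0), 0 => y; by rewrite big1 ?add0r.
  + have [p0 [c0 H0]] := IH ord0.
    exists (fun i a => r *: p0 i a), (r *: c0) => y.
    by rewrite H0 scalerDr scaler_sumr.
Qed.

Lemma In_nth' T (x0 x : T) (la : seq T) : In x la -> exists i, (i < size la)%N /\ nth x0 la i = x.
Proof.
elim: la => //= y la IH [->|H]; first by exists 0%N.
have [i [Hi Hn]] := IH H; by exists i.+1.
Qed.

Lemma gen_rep (s : signature) (A : algebra s) n (l : seq (carrier (power A n))) d x :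
  generated (power A n) (fun y => In y l) x ->
  exists F, @poly_op s A (size l) F /\
    forall j, x j = F (fun i : 'I_(size l) => nth d l i j).
Proof.
elim => [y Hy|o a _ IH].
  have [i [Hi Hn]] := @In_nth' _ d _ _ Hy.
  exists (fun z => z (Ordinal Hi)); split; first exact: pol_proj.
  by move=> j; rewrite -Hn.
pose Fs j := proj1_sig (constructive_indefinite_description _ (IH j)).
have HFs j := proj2_sig (constructive_indefinite_description _ (IH j)).
exists (fun z => interp A o (fun j => Fs j z)); split.
  by apply: pol_comp => j; case: (HFs j).
move=> j /=; congr (interp A o).
apply: functional_extensionality => j'; by case: (HFs j') => _ ->.
Qed.

Lemma leq_expr m p e : (m <= p)%N -> (m ^ e <= p ^ e)%N.
Proof. move=> H; elim: e => // e IH; by rewrite !expnS leq_mul. Qed.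

Lemma part2 s (A : algebra s) (R : pzRingType) (M : lmodType R) (h : carrier A -> M) :
  poly_equiv_via A (mod_alg M) h ->
  finite_algebra A -> (exists x y : carrier A, x <> y) ->
   exists (K N : nat), (0 < K)%N /\
     forall n : nat, (N <= n)%N -> d_ge A n (divn n K).
Proof.
case=> [[g hK gK] Heq] [la Hla] [x0 [y0 Hxy]].
set m := size la.
have m0 : (0 < m)%N by have [i [Hi _]] := @In_nth' _ x0 _ _ (Hla x0); lia.
exists (2 * m * m)%N, 0%N; split; first by rewrite !muln_gt0 m0.
move=> n _ l Hl.
set k := size l.
pose io (i : 'I_m) := nth x0 la i.
have Hio : forall a, exists i : 'I_m, io i = a.
  move=> a; have [i [Hi Hn]] := @In_nth' _ x0 _ _ (Hla a); by exists (Ordinal Hi).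
pose rho a := proj1_sig (constructive_indefinite_description _ (Hio a)).
have iorho : forall a, io (rho a) = a.
  move=> a; exact: (proj2_sig (constructive_indefinite_description _ (Hio a))).
pose d : carrier (power A n) := fun _ => x0.
pose Phi (t : ({ffun 'I_k * 'I_m -> 'I_m} * 'I_m)%type) (j : 'I_n) : carrier A :=
  g (\sum_(i < k) h (io (t.1 (i, rho (nth d l i j)))) + h (io t.2)).
have HPhi : forall x : 'I_n -> carrier A, exists t, forall j, Phi t j = x j.
  move=> x; have [F [PF HF]] := @gen_rep s A n l d x (Hl x).
  have [G [PG HG]] := (Heq k).1 F PF.
  have [phi [c Hc]] := @aff R M k G PG.
  exists ([ffun iu => rho (g (phi iu.1 (h (io iu.2))))], rho (g c)) => j.
  rewrite /Phi /= HF -[F _]hK HG Hc iorho gK; congr (g (_ + _)).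
  by apply: eq_bigr => i _; rewrite ffunE /= !iorho gK.
pose tgt (b : {ffun 'I_n -> bool}) (j : 'I_n) := if b j then y0 else x0.
pose psi b := proj1_sig (constructive_indefinite_description _ (HPhi (tgt b))).
have Hpsi : forall b j, Phi (psi b) j = tgt b j.
  move=> b; exact: (proj2_sig (constructive_indefinite_description _ (HPhi (tgt b)))).
have inj : injective psi.
  move=> b b' E; apply/ffunP => j.
  have := Hpsi b j; rewrite E Hpsi /tgt.
  case: (b j); case: (b' j) => // H; exfalso; apply: Hxy; by rewrite H.
have := leq_card psi inj.
rewrite card_ffun card_prod !card_ffun card_prod !card_ord card_bool => Hc.
have H2 : (2 ^ n <= 2 ^ (m * (k * m) + m))%N.
  apply: (leq_trans Hc); rewrite expnD (expnM 2 m); apply: leq_mul.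
    by apply: leq_expr; apply: ltnW; apply: ltn_expl.
  by apply: ltnW; apply: ltn_expl.
rewrite leq_exp2l // in H2.
rewrite -ltnS ltn_divLR ?muln_gt0 ?m0 //.
nia.
Qed.

Local Close Scope ring_scope.

Theorem theorem2p5 (s : signature) (A : algebra s) :
  affine A -> fin_generated (power A 2) ->
  (* d_A(n) in O(n) *)
  (exists (C N : nat), forall n : nat, (N <= n)%N -> d_le A n (C * n)) /\
  (* if moreover A is finite with more than one element, d_A(n) in Theta(n) *)
  (finite_algebra A -> (exists x y : carrier A, x <> y) ->
   exists (K N : nat), (0 < K)%N /\
     forall n : nat, (N <= n)%N -> d_ge A n (divn n K)).
Proof.
move=> [R [M [h Hh]]] Hfg; split.
  exact: (@part1 s A R M h Hh Hfg).
exact: (@part2 s A R M h Hh).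
Qed.
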